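(* For every simplicial set $X$ and every fibrant replacement $j\colon \mathrm{Lan}_{\blacktriangle}X \to (\mathrm{Lan}_{\blacktriangle}X)^{\mathrm{fib}}$ (a trivial cofibration with fibrant codomain) in the model structure on $\widehat{\overline{\square}}_\vee$, the derived unit composite $X \xrightarrow{\eta_X} \blacktriangle^*\mathrm{Lan}_{\blacktriangle}X \xrightarrow{\blacktriangle^* j} \blacktriangle^*((\mathrm{Lan}_{\blacktriangle}X)^{\mathrm{fib}})$ is a weak equivalence in the Kan–Quillen model structure, where $\eta$ is the unit of the adjunction $\mathrm{Lan}_\blacktriangle\dashv\blacktriangle^*$.
   Context: $\mathbf{SLat}$ is the category of (join-)semilattices (sets with an associative, commutative, idempotent binary operation $\vee$) and $\vee$-preserving maps. $\overline{\square}_\vee$ is the full subcategory of $\mathbf{SLat}$ on finite inhabited semilattices whose induced order ($x\le y\iff x\vee y=y$) is a distributive lattice. $\Delta$ is the simplex category and $\blacktriangle\colon \Delta\hookrightarrow\overline{\square}_\vee$ regards $[n]$ as a semilattice with $\vee=\max$; $\blacktriangle^*$ is restriction along $\blacktriangle$ and $\mathrm{Lan}_\blacktriangle$ its left adjoint. Presheaf categories consist of presheaves of $\kappa$-small sets for a fixed strongly inaccessible cardinal $\kappa$. The model structure on $\widehat{\overline{\square}}_\vee$ has monomorphisms as cofibrations and as fibrations the maps with the right lifting property against all pushout products $\delta_k\hat\times m$, where $\mathbb I$ is the representable on $[1]=\{0<1\}$, $\delta_k\colon 1\to\mathbb I$ ($k=0,1$) are the endpoint inclusions, $m$ ranges over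 monomorphisms, and the pushout product of $f\colon X\to Y$, $g\colon X'\to Y'$ is $(X\times Y')\sqcup_{X\times X'}(Y\times X')\to Y\times Y'$. *)

(* Defs.v *)
From Stdlib Require Import ProofIrrelevance FunctionalExtensionality.
From HB Require Import structures.
From mathcomp Require Import all_boot.
From mathcomp Require Import zify.

Set Implicit Arguments.
Unset Strict Implicit.
Unset Printing Implicit Defensive.

Lemma sig_ext (A : Type) (P : A -> Prop) (x y : sig P) :
  proj1_sig x = proj1_sig y -> x = y.
Proof. by case: x => x px; case: y => y py /= E; subst y; f_equal; apply: proof_irrelevance. Qed.

Record Cat := {
  cobj :> Type;
  chom : cobj -> cobj -> Type;
  cid : forall c, chom c c;
  ccomp : forall a b c, chom b c -> chom a b -> chom a c;
  ccomp_id_r : forall a b (f : chom a b), ccomp f (cid a) = f;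
  ccomp_assoc : forall a b c d (f : chom c d) (g : chom b c) (h : chom a b),
      ccomp f (ccomp g h) = ccomp (ccomp f g) h }.
Arguments ccomp {_ _ _ _}.
Arguments cid {_}.
Arguments chom : clear implicits.

Record PSh (C : Cat) := {
  ps :> C -> Type;
  act : forall c d : C, chom C c d -> ps d -> ps c;
  act_id : forall c x, act (cid c) x = x;
  act_comp : forall a b c (f : chom C b c) (g : chom C a b) x,
      act (ccomp f g) x = act g (act f x) }.
Arguments act {C} p {c d}.

Record NT (C : Cat) (X Y : PSh C) := {
  nt :> forall c : C, X c -> Y c;
  nt_nat : forall (c d : C) (f : chom C c d) x, nt (act X f x) = act Y f (nt x) }.
Arguments nt {C X Y} n c.

Section Generic.
Variable C : Cat.

Definition ntcomp (X Y Z : PSh C) (g : NT Y Z) (f : NT X Y) : NT X Z.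
Proof.
refine (@Build_NT C X Z (fun c x => g c (f c x)) _).
by move=> c d h x; rewrite !nt_nat.
Defined.

Definition mono (A B : PSh C) (m : NT A B) : Prop := forall c, injective (m c).

Definition lifts (A B X Y : PSh C) (i : NT A B) (p : NT X Y) : Prop :=
  forall (u : NT A X) (v : NT B Y),
    (forall c a, p c (u c a) = v c (i c a)) ->
    exists h : NT B X,
      (forall c a, h c (i c a) = u c a) /\ (forall c b, p c (h c b) = v c b).

Definition termP : PSh C.
Proof. by refine {| ps := fun _ => unit; act := fun _ _ _ x => x |}. Defined.

Definition toTerm (X : PSh C) : NT X termP.
Proof. by refine (@Build_NT C X termP (fun c _ => tt) _). Defined.

Definition prodP (X Y : PSh C) : PSh C.
Proof.
refine {| ps := fun c => (X c * Y c)%type;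
          act := fun c d f xy => (act X f xy.1, act Y f xy.2) |}.
- by move=> c [x y] /=; rewrite !act_id.
- by move=> a b c f g [x y] /=; rewrite !act_comp.
Defined.

Definition yo (c : C) : PSh C.
Proof.
refine {| ps := fun d => chom C d c;
          act := fun d e (f : chom C d e) (g : chom C e c) => ccomp g f |}.
- by move=> d g; rewrite ccomp_id_r.
- by move=> a b d f g h; rewrite ccomp_assoc.
Defined.

Definition subP (X : PSh C) (P : forall c, X c -> Prop)
  (HP : forall c d (f : chom C c d) x, P d x -> P c (act X f x)) : PSh C.
Proof.
refine {| ps := fun c => {x : X c | P c x};
          act := fun c d f x => exist _ (act X f (proj1_sig x)) (HP _ _ f _ (proj2_sig x)) |}.
- by move=> c x; apply: sig_ext; rewrite /= act_id.
- by move=> a b c f g x; apply: sig_ext; rewrite /= act_comp.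
Defined.

Definition subP_incl (X : PSh C) P HP : NT (@subP X P HP) X.
Proof. by refine (@Build_NT C (@subP X P HP) X (fun c x => proj1_sig x) _). Defined.

End Generic.

Record Functor (C D : Cat) := {
  fob :> C -> D;
  fmap : forall a b : C, chom C a b -> chom D (fob a) (fob b);
  fmap_id : forall a, fmap (cid a) = cid (fob a);
  fmap_comp : forall a b c (f : chom C b c) (g : chom C a b),
      fmap (ccomp f g) = ccomp (fmap f) (fmap g) }.
Arguments fmap {C D} _ {a b}.
Arguments fob {C D}.

Definition restrict (C D : Cat) (F : Functor C D) (Y : PSh D) : PSh C.
Proof.
refine {| ps := fun c => Y (F c); act := fun c d f y => act Y (fmap F f) y |}.
- by move=> c y; rewrite fmap_id act_id.
- by move=> a b c f g y; rewrite fmap_comp act_comp.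
Defined.

Definition restrict_nt (C D : Cat) (F : Functor C D) (Y Z : PSh D) (a : NT Y Z) :
  NT (restrict F Y) (restrict F Z).
Proof.
refine (@Build_NT C (restrict F Y) (restrict F Z) (fun c y => a (F c) y) _).
by move=> c d f y /=; rewrite nt_nat.
Defined.

Definition DHom (m n : nat) :=
  {f : 'I_m.+1 -> 'I_n.+1 | forall i j : 'I_m.+1, i <= j -> f i <= f j}.

Definition Delta : Cat.
Proof.
refine {| cobj := nat; chom := DHom;
          cid := fun n => exist (fun f : 'I_n.+1 -> 'I_n.+1 => forall i j : 'I_n.+1, i <= j -> f i <= f j) id (fun i j h => h);
          ccomp := fun a b c (f : DHom b c) (g : DHom a b) =>
             exist (fun F : 'I_a.+1 -> 'I_c.+1 => forall i j : 'I_a.+1, i <= j -> F i <= F j)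
               (fun i => proj1_sig f (proj1_sig g i))
               (fun i j h => proj2_sig f _ _ (proj2_sig g _ _ h)) |}.
- by move=> a b f; apply: sig_ext.
- by move=> a b c d f g h; apply: sig_ext.
Defined.

Definition sSet := PSh Delta.

Definition horn_pred (n : nat) (k : 'I_n.+2) (m : Delta) (f : yo (n.+1 : Delta) m) : Prop :=
  exists j : 'I_n.+2, j != k /\ forall i, proj1_sig f i != j.

Lemma horn_stable n k : forall (c d : Delta) (f : chom Delta c d) x,
  horn_pred k x -> horn_pred k (act (yo (n.+1 : Delta)) f x).
Proof. move=> c d f x [j [jk H]]; exists j; split=> // i; exact: H. Qed.

Definition horn (n : nat) (k : 'I_n.+2) : sSet := subP (@horn_stable n k).
Definition horn_incl (n : nat) (k : 'I_n.+2) : NT (horn k) (yo (n.+1 : Delta)) :=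
  subP_incl (@horn_stable n k).

(* Kan--Quillen model structure: cofibrations = monos, fibrations = Kan fibrations *)
Definition kan_fib (X Y : sSet) (p : NT X Y) : Prop :=
  forall n (k : 'I_n.+2), lifts (horn_incl k) p.

Definition KQ_triv_fib (X Y : sSet) (p : NT X Y) : Prop :=
  forall (A B : sSet) (m : NT A B), mono m -> lifts m p.

Definition KQ_triv_cof (A B : sSet) (i : NT A B) : Prop :=
  forall (X Y : sSet) (p : NT X Y), kan_fib p -> lifts i p.

Definition KQ_weq (X Y : sSet) (f : NT X Y) : Prop :=
  exists (Z : sSet) (i : NT X Z) (p : NT Z Y),
    KQ_triv_cof i /\ KQ_triv_fib p /\ forall c x, p c (i c x) = f c x.

Definition sl_le (T : Type) (j : T -> T -> T) (x y : T) : Prop := j x y = y.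

Definition is_distr_lattice (T : Type) (j : T -> T -> T) : Prop :=
  exists m : T -> T -> T,
    (forall x y, sl_le j (m x y) x /\ sl_le j (m x y) y /\
                 forall z, sl_le j z x -> sl_le j z y -> sl_le j z (m x y)) /\
    (forall x y z, m x (j y z) = j (m x y) (m x z)).

Record SLObj := {
  sl_n : nat;
  sl_join : 'I_sl_n.+1 -> 'I_sl_n.+1 -> 'I_sl_n.+1;
  sl_assoc : forall x y z, sl_join x (sl_join y z) = sl_join (sl_join x y) z;
  sl_comm : forall x y, sl_join x y = sl_join y x;
  sl_idem : forall x, sl_join x x = x;
  sl_distr : is_distr_lattice sl_join }.

Definition SLHom (c d : SLObj) :=
  {f : 'I_(sl_n c).+1 -> 'I_(sl_n d).+1 |
     forall x y, f (sl_join x y) = sl_join (f x) (f y)}.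

Definition SLcomp (a b c : SLObj) (f : SLHom b c) (g : SLHom a b) : SLHom a c.
Proof.
exists (fun i => proj1_sig f (proj1_sig g i)).
by move=> x y /=; rewrite (proj2_sig g) (proj2_sig f).
Defined.

Definition SL : Cat.
Proof.
refine {| cobj := SLObj; chom := SLHom;
          cid := fun c => exist (fun f : 'I_(sl_n c).+1 -> 'I_(sl_n c).+1 => forall x y, f (sl_join x y) = sl_join (f x) (f y)) id (fun x y => erefl);
          ccomp := SLcomp |}.
- by move=> a b f; apply: sig_ext.
- by move=> a b c d f g h; apply: sig_ext.
Defined.

Definition trijoin (n : nat) (x y : 'I_n.+1) : 'I_n.+1 := if x <= y then y else x.

Lemma trijoin_val n (x y : 'I_n.+1) : nat_of_ord (trijoin x y) = maxn x y.
Proof. by rewrite /trijoin /maxn; case: leqP => h; case: ltnP => h' //; lia. Qed.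

Definition trimeet (n : nat) (x y : 'I_n.+1) : 'I_n.+1 := if x <= y then x else y.

Lemma trimeet_val n (x y : 'I_n.+1) : nat_of_ord (trimeet x y) = minn x y.
Proof. by rewrite /trimeet /minn; case: leqP => h; case: ltnP => h' //; lia. Qed.

Lemma tri_le n (x y : 'I_n.+1) : sl_le (@trijoin n) x y <-> x <= y.
Proof.
rewrite /sl_le; split.
- by move/(congr1 (@nat_of_ord _)); rewrite trijoin_val => <-; lia.
- by move=> h; apply: val_inj; rewrite /= trijoin_val; lia.
Qed.

Definition tri (n : nat) : SLObj.
Proof.
refine {| sl_n := n; sl_join := @trijoin n |}.
- by move=> x y z; apply: val_inj; rewrite /= !trijoin_val; lia.
- by move=> x y; apply: val_inj; rewrite /= !trijoin_val; lia.
- by move=> x; apply: val_inj; rewrite /= !trijoin_val; lia.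
- exists (@trimeet n); split.
  + move=> x y; rewrite !tri_le !trimeet_val; split; [lia|split; [lia|]].
    by move=> z; rewrite !tri_le trimeet_val; lia.
  + by move=> x y z; apply: val_inj; rewrite /= !(trijoin_val, trimeet_val); lia.
Defined.

Definition tri_map (m n : nat) (f : DHom m n) : SLHom (tri m) (tri n).
Proof.
exists (proj1_sig f) => x y /=; rewrite /trijoin.
case: (leqP x y) => h.
- by rewrite (proj2_sig f _ _ h).
- have h2 := proj2_sig f _ _ (ltnW h).
  by case: leqP => h3 //; apply/eqP; rewrite -val_eqE /= eqn_leq h2 h3.
Defined.

Definition blacktriangle : Functor Delta SL.
Proof.
refine {| fob := (tri : Delta -> SL); fmap := tri_map |}.
- by move=> a; apply: sig_ext.
- by move=> a b c f g; apply: sig_ext.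
Defined.

Definition slPSh := PSh SL.

Definition Intv : slPSh := yo (tri 1 : SL).

Definition const_hom (c : SL) (k : 'I_2) : chom SL c (tri 1 : SL).
Proof. by exists (fun _ => k) => x y /=; rewrite /trijoin leqnn. Defined.

Definition delta (k : 'I_2) : NT (termP SL) Intv.
Proof.
refine (@Build_NT SL (termP SL) Intv (fun c (_ : unit) => const_hom c k) _).
by move=> c d f x; apply: sig_ext.
Defined.

(* right lifting property of p against the pushout product delta_k ^x m,
   i.e. against the induced map (I x A) +_{1 x A} (1 x B) -> I x B;
   maps out of the pushout are given by compatible pairs (u, v). *)
Definition pp_lifts (k : 'I_2) (A B : slPSh) (m : NT A B) (X Y : slPSh) (p : NT X Y) : Prop :=
  forall (u : NT (prodP Intv A) X) (v : NT (prodP (termP SL) B) X) (w : NT (prodP Intv B) Y),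
    (forall c t a, u c (delta k c t, a) = v c (t, m c a)) ->
    (forall c i a, p c (u c (i, a)) = w c (i, m c a)) ->
    (forall c t b, p c (v c (t, b)) = w c (delta k c t, b)) ->
    exists h : NT (prodP Intv B) X,
      (forall c i a, h c (i, m c a) = u c (i, a)) /\
      (forall c t b, h c (delta k c t, b) = v c (t, b)) /\
      (forall c ib, p c (h c ib) = w c ib).

Definition cub_fib (X Y : slPSh) (p : NT X Y) : Prop :=
  forall (k : 'I_2) (A B : slPSh) (m : NT A B), mono m -> pp_lifts k m p.

Definition cub_fibrant (F : slPSh) : Prop := cub_fib (toTerm F).

Definition cub_triv_cof (A B : slPSh) (j : NT A B) : Prop :=
  mono j /\ forall (X Y : slPSh) (p : NT X Y), cub_fib p -> lifts j p.

Definition is_lan_unit (X : sSet) (L : slPSh) (eta : NT X (restrict blacktriangle L)) : Prop :=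
  forall (Y : slPSh) (g : NT X (restrict blacktriangle Y)),
    exists h : NT L Y,
      (forall n x, h (tri n) (eta n x) = g n x) /\
      (forall h' : NT L Y, (forall n x, h' (tri n) (eta n x) = g n x) ->
         forall c y, h' c y = h c y).

(* Main.v *)
From Stdlib Require Import ProofIrrelevance FunctionalExtensionality Classical ClassicalEpsilon.
Require Import Defs.
From mathcomp Require Import all_boot zify.
From mathcomp Require boolp classical_sets.
Set Implicit Arguments.
Unset Strict Implicit.
Unset Printing Implicit Defensive.


Lemma dhom_ext (m n : nat) (f g : chom Delta m n) :
  (forall i, proj1_sig f i = proj1_sig g i) -> f = g.
Proof. by move=> E; apply: sig_ext; apply: functional_extensionality. Qed.

Definition dsurj (m n : nat) (f : chom Delta m n) : Prop :=
  forall y : 'I_n.+1, exists x, proj1_sig f x = y.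

Lemma ccompE (a b c : Delta) (f : chom Delta b c) (g : chom Delta a b) i :
  proj1_sig (ccomp f g) i = proj1_sig f (proj1_sig g i).
Proof. by []. Qed.

Lemma dmono (m n : nat) (f : chom Delta m n) (i j : 'I_m.+1) : i <= j -> proj1_sig f i <= proj1_sig f j.
Proof. exact: (proj2_sig f). Qed.

Lemma factor_nonsurj (c n : nat) (g : chom Delta c n.+1) :
  ~ dsurj g -> exists (g' : chom Delta c n) (d : chom Delta n n.+1), g = ccomp d g'.
Proof.
move=> ns.
have [l hl] : exists l : 'I_n.+2, forall x, proj1_sig g x != l.
  case: (boolP [exists l : 'I_n.+2, [forall x, proj1_sig g x != l]]).
    by case/existsP=> l /forallP hl; exists l.
  move=> H; exfalso; apply: ns => y.
  move: H; rewrite negb_exists => /forallP /(_ y); rewrite negb_forall.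
  by case/existsP=> x; rewrite negbK => /eqP; exists x.
pose gf (x : 'I_c.+1) : 'I_n.+1 :=
  inord (if proj1_sig g x < l then (proj1_sig g x : nat) else (proj1_sig g x).-1).
pose df (y : 'I_n.+1) : 'I_n.+2 := inord (if y < l then y : nat else y.+1).
have gfE x : (gf x : nat) = if proj1_sig g x < l then (proj1_sig g x : nat) else (proj1_sig g x).-1.
  rewrite /gf inordK //; have := ltn_ord (proj1_sig g x); have := ltn_ord l.
  have := hl x; rewrite -val_eqE /=; case: ifP; lia.
have dfE y : (df y : nat) = if y < l then y : nat else y.+1.
  by rewrite /df inordK //; have := ltn_ord y; case: ifP; lia.
have gm : forall i j : 'I_c.+1, i <= j -> gf i <= gf j.
  move=> i j le; rewrite !gfE; have := dmono g le; have := hl i; have := hl j.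
  rewrite -!val_eqE /=; do 2 case: ifP; lia.
have dm : forall i j : 'I_n.+1, i <= j -> df i <= df j.
  by move=> i j le; rewrite !dfE; do 2 case: ifP; lia.
exists (exist _ gf gm), (exist _ df dm); apply: dhom_ext => x /=.
apply: val_inj; rewrite /= dfE gfE; have := hl x; rewrite -val_eqE /=.
by do 2 case: ifP; lia.
Qed.

Lemma minsec (c n : nat) (s : chom Delta c n) : dsurj s ->
  exists sg : chom Delta n c, (forall y, proj1_sig s (proj1_sig sg y) = y) /\
     (forall x, proj1_sig sg (proj1_sig s x) <= x).
Proof.
move=> su.
pose pr (y : 'I_n.+1) : 'I_c.+1 := odflt ord0 [pick x | proj1_sig s x == y].
have Ppr y : proj1_sig s (pr y) == y.
  rewrite /pr; case: pickP => [x //|] /= H.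
  by have [x hx] := su y; move: (H x); rewrite hx eqxx.
pose sg (y : 'I_n.+1) : 'I_c.+1 := [arg min_(i < pr y | proj1_sig s i == y) (i : nat)].
have sgP y : proj1_sig s (sg y) = y /\ forall x, proj1_sig s x = y -> sg y <= x.
  rewrite /sg; case: arg_minnP => [|i /eqP hi hmin]; first exact: Ppr.
  by split=> // x hx; apply: hmin; rewrite hx.
have sgm : forall i j : 'I_n.+1, i <= j -> sg i <= sg j.
  move=> i j le; rewrite leqNgt; apply/negP => lt.
  have := dmono s (ltnW lt); rewrite !(proj1 (sgP _)) => le2.
  have eij : i = j by apply: val_inj; apply/eqP; rewrite eqn_leq le le2.
  by move: lt; rewrite eij ltnn.
exists (exist _ sg sgm); split => [y|x] /=; first exact: (proj1 (sgP y)).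
exact: (proj2 (sgP _)).
Qed.

Lemma surj_endo_id (n : nat) (f : chom Delta n n) : dsurj f -> f = cid (n : Delta).
Proof.
move=> su; have [sg [h1 h2]] := minsec su.
have inj : injective (proj1_sig sg) by move=> a b e; rewrite -(h1 a) -(h1 b) e.
have sinc : forall i j : 'I_n.+1, i < j -> proj1_sig sg i < proj1_sig sg j.
  move=> i j lt; rewrite ltn_neqAle dmono ?(ltnW lt) // andbT.
  by apply/negP => /eqP /val_inj /inj e; move: lt; rewrite e ltnn.
have lo : forall k (hk : k < n.+1), k <= proj1_sig sg (Ordinal hk).
  elim=> [//|k IH] hk.
  have hk' : k < n.+1 by lia.
  have := sinc (Ordinal hk') (Ordinal hk) (ltnSn k); have := IH hk'; lia.
have hi : forall d k (hk : k < n.+1), k + d = n -> proj1_sig sg (Ordinal hk) <= k.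
  elim=> [|d IH] k hk e.
    by have := ltn_ord (proj1_sig sg (Ordinal hk)); lia.
  have hk' : k.+1 < n.+1 by lia.
  have := sinc (Ordinal hk) (Ordinal hk') (ltnSn k); have := IH k.+1 hk' (ltac:(lia)); lia.
have sgid : forall y, proj1_sig sg y = y.
  move=> [y hy]; apply: val_inj; apply/eqP; rewrite eqn_leq lo andbT.
  by apply: (hi (n - y)); lia.
by apply: dhom_ext => x /=; have := h1 x; rewrite sgid.
Qed.

Section MinSimplex.
Variables (B : sSet) (S : forall c, B c -> Prop).
Hypothesis Sst : forall c d (f : chom Delta c d) y, S y -> S (act B f y).
Variables (n : nat) (b : B n).
Hypothesis nSb : ~ S b.
Hypothesis low : forall m, m < n -> forall y : B m, S y.

Lemma NS c (g : chom Delta c n) : ~ dsurj g -> S (act B g b).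
Proof.
move=> ns; case: n g b nSb low ns => [|n'] g b' _ low' ns.
  exfalso; apply: ns => y; exists ord0; apply: val_inj.
  by move: (proj1_sig g ord0) y => [[|//] ?] [[|//] ?].
have [g' [d ->]] := factor_nonsurj ns.
rewrite act_comp; apply: Sst; exact: low'.
Qed.

Lemma SS c (g : chom Delta c n) : dsurj g -> ~ S (act B g b).
Proof.
move=> su Sg; have [sg [h1 _]] := minsec su.
apply: nSb; have := Sst sg Sg; rewrite -act_comp.
have -> : ccomp g sg = cid (n : Delta) by apply: dhom_ext => y /=; rewrite h1.
by rewrite act_id.
Qed.

Lemma UQ0 c (s1 s2 : chom Delta c n) (sg : chom Delta n c) :
  act B s1 b = act B s2 b -> (forall y, proj1_sig s2 (proj1_sig sg y) = y) ->
  forall y, proj1_sig s1 (proj1_sig sg y) = y.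
Proof.
move=> e h1.
have : dsurj (ccomp s1 sg).
  case: (classic (dsurj (ccomp s1 sg))) => // ns; exfalso; apply: nSb.
  have := NS ns; rewrite act_comp e -act_comp.
  have -> : ccomp s2 sg = cid (n : Delta) by apply: dhom_ext => y /=; rewrite h1.
  by rewrite act_id.
by move/surj_endo_id => E y; have := f_equal (fun f => proj1_sig f y) E.
Qed.

Lemma UQ c (s s' : chom Delta c n) : dsurj s -> act B s b = act B s' b -> s = s'.
Proof.
move=> su e.
have su' : dsurj s'.
  case: (classic (dsurj s')) => // ns.
  by exfalso; apply: (SS su); rewrite e; apply: NS.
have [sg [h1 h2]] := minsec su'.
have [tg [t1 t2]] := minsec su.
have ssg := UQ0 e h1.
have stg := UQ0 (esym e) t1.
apply: dhom_ext => x; apply: val_inj; apply/eqP; rewrite eqn_leq; apply/andP; split.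
- by have := dmono s' (t2 x); rewrite stg.
- by have := dmono s (h2 x); rewrite ssg.
Qed.
End MinSimplex.


Section Attach.
Variables (T E Y : sSet) (q : NT E Y) (w : NT T Y).
Hypothesis kq : kan_fib q.

Definition pstable (Dm : forall c, T c -> Prop) :=
  forall c d (f : chom Delta c d) x, Dm d x -> Dm c (act T f x).

Definition ppmap (Dm : forall c, T c -> Prop) (h : forall c, T c -> E c) :=
  (forall c d (f : chom Delta c d) x, Dm d x -> h c (act T f x) = act E f (h d x)) /\
  (forall c x, Dm c x -> q c (h c x) = w c x).

Variables (Dm : forall c, T c -> Prop) (h : forall c, T c -> E c).
Hypothesis Dst : pstable Dm.
Hypothesis hp : ppmap Dm h.
Variables (n : nat) (sg : T n.+1) (kk : 'I_n.+2).
Hypothesis H1 : forall c (f : chom Delta c n.+1), Dm (act T f sg) <-> horn_pred kk f.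
Hypothesis H2 : forall c (f g : chom Delta c n.+1), ~ Dm (act T f sg) ->
  act T f sg = act T g sg -> f = g.

Definition Dm' c (x : T c) := Dm x \/ exists f : chom Delta c n.+1, x = act T f sg.

Lemma Dm'_st : pstable Dm'.
Proof.
move=> c d f x [Dx|[g ->]]; first by left; apply: Dst.
by right; exists (ccomp g f); rewrite act_comp.
Qed.

Definition hornu_c c (x : horn kk c) : E c := h (act T (proj1_sig x) sg).

Definition hornu : NT (horn kk) E.
Proof.
refine (@Build_NT Delta (horn kk) E hornu_c _).
move=> c d f [x hx]; rewrite /hornu_c /= act_comp; apply: (proj1 hp).
exact/H1.
Defined.

Definition hornv : NT (yo (n.+1 : Delta)) Y.
Proof.
refine (@Build_NT Delta (yo (n.+1 : Delta)) Y (fun c f => w c (act T f sg)) _).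
by move=> c d f x /=; rewrite act_comp nt_nat.
Defined.

Lemma attach : exists h' : forall c, T c -> E c,
  (forall c x, Dm x -> h' c x = h x) /\ ppmap Dm' h'.
Proof.
have L : lifts (horn_incl kk) q by apply: kq.
move: L; rewrite /lifts => /(_ hornu hornv) [].
  by move=> c x; apply: (proj2 hp); apply/H1; exact: (proj2_sig x).
move=> G [G1 G2].
pose cp c (x : T c) : option (chom Delta c n.+1) :=
  match excluded_middle_informative (exists f, x = act T f sg) with
  | left pf => Some (proj1_sig (constructive_indefinite_description _ pf))
  | right _ => None end.
have cpP c x f : x = act T f sg -> exists f0, cp c x = Some f0 /\ x = act T f0 sg.
  move=> e; rewrite /cp; case: excluded_middle_informative => [pf|[]]; last by exists f.
  case: constructive_indefinite_description => f0 hf0 /=; by exists f0.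
pose h' c (x : T c) : E c :=
  match excluded_middle_informative (Dm x) with
  | left _ => h x
  | right _ => match cp c x with Some f => G c f | None => h x end end.
have h'D c x : Dm x -> h' c x = h x.
  by move=> Dx; rewrite /h'; case: excluded_middle_informative.
have h'S c f : h' c (act T f sg) = G c f.
  rewrite /h'; case: excluded_middle_informative => [Dx|nD].
    have hf := proj1 (H1 f) Dx.
    by have := G1 c (exist _ f hf); rewrite /= /hornu_c /= => ->.
  have [f0 [-> e]] := cpP c _ f erefl.
  by rewrite (H2 nD e).
exists h'; split => //; split.
- move=> c d f x [Dx|[g ->]].
    by rewrite !h'D //; [apply: (proj1 hp)|apply: Dst].
  by rewrite -act_comp !h'S -nt_nat.
- move=> c x [Dx|[g ->]]; first by rewrite h'D //; apply: (proj2 hp).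
  by rewrite h'S G2.
Qed.

End Attach.


Definition Isl : sSet := restrict blacktriangle Intv.
Definition dk (k : 'I_2) (c : Delta) : Isl c := const_hom (tri c) k.

Definition ttf (n i : nat) (l : 'I_n.+2) : 'I_2 := inord (i < l).
Arguments ttf : clear implicits.
Lemma ttfE n i l : (ttf n i l : nat) = (i < l).
Proof. by rewrite /ttf inordK //; case: (i < l). Qed.
Definition ttD (n i : nat) : chom Delta n.+1 1.
Proof. exists (ttf n i) => a b le; rewrite !ttfE; case: (ltnP i a); case: (ltnP i b) => //; lia. Defined.

Definition xxf (n i : nat) (l : 'I_n.+2) : 'I_n.+1 := inord (minn n (l - (i < l))).
Arguments xxf : clear implicits.
Lemma xxfE n i l : i <= n -> (xxf n i l : nat) = l - (i < l).
Proof.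
move=> le; rewrite /xxf inordK; last lia.
have := ltn_ord l; case: ltnP => h; lia.
Qed.
Definition xxD (n i : nat) : chom Delta n.+1 n.
Proof.
by exists (xxf n i) => a b le; rewrite /xxf !inordK; try lia.
Defined.

Lemma dk_iff (k : 'I_2) c (g : chom Delta c 1) :
  tri_map g = dk k c <-> forall p, proj1_sig g p = k.
Proof.
split => [e p|H]; first by have := f_equal (fun x => proj1_sig x p) e.
by apply: sig_ext; apply: functional_extensionality.
Qed.

Lemma tri_map_inj c (g g' : chom Delta c 1) : tri_map g = tri_map g' -> forall p, proj1_sig g p = proj1_sig g' p.
Proof. by move=> e p; have := f_equal (fun x => proj1_sig x p) e. Qed.

Lemma tri_map_ext c (g g' : chom Delta c 1) : (forall p, proj1_sig g p = proj1_sig g' p) -> tri_map g = tri_map g'.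
Proof. by move=> e; apply: sig_ext; apply: functional_extensionality. Qed.

Lemma sl_mono (a b : nat) (phi : chom SL (tri a : SL) (tri b : SL)) :
  forall i j : 'I_a.+1, i <= j -> proj1_sig phi i <= proj1_sig phi j.
Proof.
move=> i j le.
have e : trijoin i j = j by apply/tri_le.
have := proj2_sig phi i j; rewrite /= e => e2.
by apply/tri_le; rewrite /sl_le -e2.
Qed.

Definition sl2d (a b : nat) (phi : chom SL (tri a : SL) (tri b : SL)) : chom Delta a b :=
  exist _ (proj1_sig phi) (@sl_mono a b phi).

Lemma Isl_tri c (t : Isl c) : t = tri_map (sl2d t).
Proof. by apply: sig_ext. Qed.

Section Prism.
Variables (k : 'I_2) (B E Y : sSet) (q : NT E Y) (w : NT (prodP Isl B) Y).
Hypothesis kq : kan_fib q.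
Variables (S : forall c, B c -> Prop).
Hypothesis Sst : forall c d (f : chom Delta c d) y, S y -> S (act B f y).
Variables (n : nat) (b : B n).
Hypothesis nSb : ~ S b.
Hypothesis low : forall m, m < n -> forall y : B m, S y.

Local Notation T := (prodP Isl B).

Definition sig (i : nat) : T n.+1 := (tri_map (ttD n i), act B (xxD n i) b).

Lemma actsig c (f : chom Delta c n.+1) i :
  act T f (sig i) = (tri_map (ccomp (ttD n i) f), act B (ccomp (xxD n i) f) b).
Proof. rewrite /= -act_comp; congr pair; exact: sig_ext. Qed.

Definition Dm0 c (x : T c) := S x.2 \/ x.1 = dk k c.

Definition DmA (Att : nat -> Prop) c (x : T c) :=
  Dm0 x \/ exists j, Att j /\ exists g : chom Delta c n.+1, x = act T g (sig j).

Lemma F1 c (f : chom Delta c n.+1) i (l : 'I_n.+2) : i <= n -> (forall p, proj1_sig f p != l) ->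
  (l < i \/ i.+1 < l) -> ~ dsurj (ccomp (xxD n i) f).
Proof.
move=> hi hl hc su.
have hv : (if l < i then l : nat else (l : nat).-1) < n.+1 by have := ltn_ord l; case: ifP; lia.
have [p hp] := su (Ordinal hv).
have := f_equal val hp; rewrite /= xxfE // => e.
have := hl p; rewrite -val_eqE /=; move: e; case: ifP; case: ltnP; lia.
Qed.

Lemma F2 c (f : chom Delta c n.+1) i (kk : 'I_n.+2) : i <= n -> (kk = i :> nat \/ kk = i.+1 :> nat) ->
  (forall l : 'I_n.+2, l != kk -> exists p, proj1_sig f p = l) -> dsurj (ccomp (xxD n i) f).
Proof.
move=> hi hk H v.
pose l0 : nat := if v < i then (v : nat) else if i < v then v.+1 else (if kk == i :> nat then i.+1 else i).
have hl0 : l0 < n.+2 by have := ltn_ord v; rewrite /l0; repeat (case: ifP => ?); lia.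
have [|p hp] := H (Ordinal hl0).
  by rewrite -val_eqE /= /l0; repeat (case: ifP => ?); lia.
exists p; apply: val_inj; rewrite /= xxfE // hp /= /l0.
by repeat (case: ifP => ?); lia.
Qed.


Lemma EQ c (f g : chom Delta c n.+1) i j : act T f (sig i) = act T g (sig j) ->
  (forall p, (i < proj1_sig f p) = (j < proj1_sig g p)) /\
  act B (ccomp (xxD n i) f) b = act B (ccomp (xxD n j) g) b.
Proof.
rewrite !actsig => e; case: (e) => e1 e2; split; last exact: e2.
move=> p; have := f_equal (fun F => val (F p)) e1; rewrite /= !ttfE.
by case: (i < _); case: (j < _).
Qed.

Lemma F3 c (f : chom Delta c n.+1) i : i < n -> (forall p, (proj1_sig f p : nat) != i.+1) ->
  act T f (sig i) = act T f (sig i.+1).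
Proof.
move=> hi hp; rewrite !actsig; congr pair.
  by apply: tri_map_ext => p; apply: val_inj; rewrite /= !ttfE; move: (hp p); case: ltnP; case: ltnP; lia.
congr (act B _ b); apply: dhom_ext => p; apply: val_inj; rewrite /= !xxfE; try lia.
by move: (hp p); case: ltnP; case: ltnP; lia.
Qed.

Lemma F3' c (f : chom Delta c n.+1) i : 0 < i -> i <= n -> (forall p, (proj1_sig f p : nat) != i) ->
  act T f (sig i) = act T f (sig i.-1).
Proof.
move=> hi hi' hp; rewrite !actsig; congr pair.
  by apply: tri_map_ext => p; apply: val_inj; rewrite /= !ttfE; move: (hp p); case: ltnP; case: ltnP; lia.
congr (act B _ b); apply: dhom_ext => p; apply: val_inj; rewrite /= !xxfE; try lia.
by move: (hp p); case: ltnP; case: ltnP; lia.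
Qed.

Lemma F5 c (f : chom Delta c n.+1) : (k : nat) = 0 -> (forall p, (proj1_sig f p : nat) != n.+1) ->
  (act T f (sig n)).1 = dk k c.
Proof.
move=> hk hp; rewrite actsig /=; apply/dk_iff => p; apply: val_inj.
by rewrite /= ttfE hk; move: (hp p); have := ltn_ord (proj1_sig f p); case: ltnP; lia.
Qed.

Lemma F5' c (f : chom Delta c n.+1) : (k : nat) = 1 -> (forall p, (proj1_sig f p : nat) != 0) ->
  (act T f (sig 0)).1 = dk k c.
Proof.
move=> hk hp; rewrite actsig /=; apply/dk_iff => p; apply: val_inj.
by rewrite /= ttfE hk; move: (hp p); case: ltnP; lia.
Qed.

Lemma F6 c (f : chom Delta c n.+1) i p : i <= n -> (k : nat) = 0 -> (proj1_sig f p : nat) = n.+1 ->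
  (act T f (sig i)).1 <> dk k c.
Proof.
move=> hi hk hp; rewrite actsig /= => /dk_iff /(_ p) /(f_equal val).
by rewrite /= ttfE hk hp; case: ltnP; lia.
Qed.

Lemma F6' c (f : chom Delta c n.+1) i p : (k : nat) = 1 -> (proj1_sig f p : nat) = 0 ->
  (act T f (sig i)).1 <> dk k c.
Proof.
move=> hk hp; rewrite actsig /= => /dk_iff /(_ p) /(f_equal val).
by rewrite /= ttfE hk hp; case: ltnP; lia.
Qed.


Lemma surj_of_nS c (g : chom Delta c n) : ~ S (act B g b) -> dsurj g.
Proof. by move=> nS; case: (classic (dsurj g)) => // ns; exfalso; apply: nS; exact: (NS Sst nSb low). Qed.

Lemma H2A (Att : nat -> Prop) i c (f g : chom Delta c n.+1) : i <= n ->
  ~ DmA Att (act T f (sig i)) -> act T f (sig i) = act T g (sig i) -> f = g.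
Proof.
move=> hi nD e.
have nS : ~ S (act B (ccomp (xxD n i) f) b).
  by move=> hS; apply: nD; left; left; rewrite actsig.
have su := surj_of_nS nS.
have [et ex] := EQ e.
have ex' := UQ Sst nSb low su ex.
apply: dhom_ext => p; apply: val_inj; have := f_equal (fun F => val (proj1_sig F p)) ex'.
rewrite /= !xxfE //; have := et p; do 2 case: ltnP; lia.
Qed.

Lemma notH (kk : 'I_n.+2) c (f : chom Delta c n.+1) : ~ horn_pred kk f ->
  forall l : 'I_n.+2, l != kk -> exists p, proj1_sig f p = l.
Proof.
move=> nh l hl; case: (classic (exists p, proj1_sig f p = l)) => // np.
exfalso; apply: nh; exists l; split => // p; apply/negP => /eqP e; apply: np; by exists p.
Qed.

Lemma H1_0 (Att : nat -> Prop) i c (f : chom Delta c n.+1) : (k : nat) = 0 -> i <= n ->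
  (i < n -> Att i.+1) -> (forall j, Att j -> i < j /\ j <= n) ->
  DmA Att (act T f (sig i)) <-> horn_pred (inord i) f.
Proof.
move=> hk hi hn hg; have vi : (inord i : 'I_n.+2) = i :> nat by rewrite inordK //; lia.
split.
- move=> D; case: (classic (horn_pred (inord i) f)) => // nh; exfalso.
  have H := notH nh.
  have su : dsurj (ccomp (xxD n i) f) by apply: (F2 (kk := inord i)) => //; left.
  have [pM hpM] : exists p, proj1_sig f p = ord_max.
    by apply: H; rewrite -val_eqE /= vi; lia.
  have [p1 hp1] : exists p, proj1_sig f p = inord i.+1.
    by apply: H; rewrite -val_eqE /= vi inordK; lia.
  case: D => [[hS|hd]|[j [aj [g e]]]].
  + by rewrite actsig in hS; exact: (SS Sst nSb su hS).
  + have e : (proj1_sig f pM : nat) = n.+1 by rewrite hpM.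
    exact: (F6 hi hk e hd).
  + have [ij jn] := hg j aj.
    have [et ex] := EQ e.
    have ex' := UQ Sst nSb low su ex.
    have := f_equal (fun F => val (proj1_sig F p1)) ex'; have := et p1.
    rewrite /= !xxfE // hp1 inordK; last lia.
    by case: ltnP; case: ltnP; lia.
- move=> [l [hl hm]].
  have hl' : (l : nat) != i by rewrite -vi val_eqE.
  case: (boolP ((l < i) || (i.+1 < l))) => [/orP hc|].
    by left; left; rewrite actsig /=; apply: (NS Sst nSb low); apply: (F1 hi hm); case: hc; [left|right].
  rewrite negb_or -!leqNgt => /andP [h1 h2].
  have el : (l : nat) = i.+1 by lia.
  case: (ltnP i n) => hin.
    right; exists i.+1; split; first exact: hn.
    exists f; apply: F3 => // p; have := hm p; rewrite -val_eqE /= el; apply.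
  have ein : i = n by lia.
  subst i; left; right; apply: F5 => // p; have := hm p; rewrite -val_eqE /= el; apply.
Qed.

Lemma H1_1 (Att : nat -> Prop) i c (f : chom Delta c n.+1) : (k : nat) = 1 -> i <= n ->
  (0 < i -> Att i.-1) -> (forall j, Att j -> j < i) ->
  DmA Att (act T f (sig i)) <-> horn_pred (inord i.+1) f.
Proof.
move=> hk hi hn hg; have vi : (inord i.+1 : 'I_n.+2) = i.+1 :> nat by rewrite inordK //; lia.
split.
- move=> D; case: (classic (horn_pred (inord i.+1) f)) => // nh; exfalso.
  have H := notH nh.
  have su : dsurj (ccomp (xxD n i) f) by apply: (F2 (kk := inord i.+1)) => //; right.
  have [p0 hp0] : exists p, proj1_sig f p = ord0.
    by apply: H; rewrite -val_eqE /= vi.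
  have [p1 hp1] : exists p, proj1_sig f p = inord i.
    by apply: H; rewrite -val_eqE /= vi inordK; lia.
  case: D => [[hS|hd]|[j [aj [g e]]]].
  + by rewrite actsig /= in hS; exact: (SS Sst nSb su hS).
  + have e : (proj1_sig f p0 : nat) = 0 by rewrite hp0.
    exact: (F6' hk e hd).
  + have ij := hg j aj.
    have [et ex] := EQ e.
    have ex' := UQ Sst nSb low su ex.
    have := f_equal (fun F => val (proj1_sig F p1)) ex'; have := et p1.
    rewrite /= !xxfE // ?hp1 ?inordK; try lia.
- move=> [l [hl hm]].
  have hl' : (l : nat) != i.+1 by rewrite -vi val_eqE.
  case: (boolP ((l < i) || (i.+1 < l))) => [/orP hc|].
    by left; left; rewrite actsig /=; apply: (NS Sst nSb low); apply: (F1 hi hm); case: hc; [left|right].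
  rewrite negb_or -!leqNgt => /andP [h1 h2].
  have el : (l : nat) = i by lia.
  case: (posnP i) => hin.
    rewrite hin in el *; left; right; apply: F5' => // p; have := hm p; rewrite -val_eqE /= el; apply.
  right; exists i.-1; split; first exact: hn.
  exists f; apply: F3' => // p; have := hm p; rewrite -val_eqE /= el; apply.
Qed.


Lemma act_dk c d (f : chom Delta c d) : act Isl f (dk k d) = dk k c.
Proof. by apply: sig_ext. Qed.

Lemma Dm0_st : pstable Dm0.
Proof.
move=> c d f [t y] [hS|hd]; [left; exact: Sst|right].
by move: hd => /= ->; exact: act_dk.
Qed.

Lemma DmA_st Att : pstable (DmA Att).
Proof.
move=> c d f x [D|[j [aj [g ->]]]]; first by left; apply: Dm0_st.
by right; exists j; split => //; exists (ccomp g f); rewrite act_comp.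
Qed.

Lemma pmap_sub (D1 D2 : forall c, T c -> Prop) h' :
  (forall c x, D1 c x -> D2 c x) -> ppmap q w D2 h' -> ppmap q w D1 h'.
Proof. by move=> sub [p1 p2]; split => *; [apply: p1|apply: p2]; apply: sub. Qed.

Variables (h : forall c, T c -> E c).
Hypothesis hp : ppmap q w Dm0 h.

Definition att (r j : nat) : Prop := if (k : nat) == 0 then (n.+1 - r <= j) && (j <= n) else j < r.
Definition ii (r : nat) : nat := if (k : nat) == 0 then n - r else r.
Definition kki (r : nat) : 'I_n.+2 := if (k : nat) == 0 then inord (n - r) else inord r.+1.

Lemma k01 : (k : nat) = 0 \/ (k : nat) = 1.
Proof. by case: k => [[|[|]]] //=; [left|right]. Qed.

Lemma iter r : r <= n.+1 -> exists h' : forall c, T c -> E c,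
  (forall c x, Dm0 x -> h' c x = h x) /\ ppmap q w (DmA (att r)) h'.
Proof.
elim: r => [_|r IH hr].
  exists h; split => //; apply: pmap_sub hp => c x [//|[j [aj _]]].
  by move: aj; rewrite /att; case: ifP => _; lia.
have [hr' [hr1 hr2]] := IH (ltnW hr).
have iin : ii r <= n by rewrite /ii; case: ifP => _; lia.
have HH1 : forall c (f : chom Delta c n.+1), DmA (att r) (act T f (sig (ii r))) <-> horn_pred (kki r) f.
  move=> c f; case: k01 => hk.
  + rewrite /kki /ii hk /=; apply: H1_0;
      [by []|lia|move=> hlt; rewrite /att hk /=; lia|move=> j; rewrite /att hk /=; lia].
  + rewrite /kki /ii hk /=; apply: H1_1;
      [by []|lia|move=> hlt; rewrite /att hk /=; lia|move=> j; rewrite /att hk /=; lia].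
have HH2 : forall c (f g : chom Delta c n.+1), ~ DmA (att r) (act T f (sig (ii r))) ->
    act T f (sig (ii r)) = act T g (sig (ii r)) -> f = g.
  by move=> c f g; apply: H2A.
have [h'' [h1 h2]] := @attach _ _ _ q w kq (DmA (att r)) hr' (@DmA_st (att r)) hr2 n (sig (ii r)) (kki r) HH1 HH2.
exists h''; split.
  by move=> c x D; rewrite h1; [exact: hr1|left].
apply: pmap_sub h2 => c x [D|[j [aj [g ->]]]]; first by left; left.
case: (eqVneq j (ii r)) => [->|ne]; first by right; exists g.
left; right; exists j; split; last by exists g.
move: ne aj; rewrite /att /ii; case: ifP => _ /eqP ne.
  by move=> /andP [a1 a2]; apply/andP; lia.
by lia.
Qed.

Lemma cover c (t : Isl c) (f : chom Delta c n) :
  exists j, j <= n /\ exists g : chom Delta c n.+1, (t, act B f b) = act T g (sig j).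
Proof.
have tm := @sl_mono c 1 t.
have t01 p : (proj1_sig t p : nat) = 0 \/ (proj1_sig t p : nat) = 1.
  by case: (proj1_sig t p) => [[|[|]]] //= _; [left|right].
have [j [jn [hb hc]]] : exists j, j <= n /\ (forall p, (proj1_sig t p : nat) = 0 -> proj1_sig f p <= j) /\
    (forall p, (proj1_sig t p : nat) = 1 -> j <= proj1_sig f p).
  case: (boolP [exists p, (proj1_sig t p : nat) == 1]) => [/existsP [p0 hp0]|].
    case: (@arg_minnP _ p0 (fun p => (proj1_sig t p : nat) == 1) (fun p : 'I_c.+1 => (p : nat)) hp0) => ps /eqP hps hmin.
    exists (proj1_sig f ps); split; first by have := ltn_ord (proj1_sig f ps); lia.
    split => p hq.
      apply: dmono; rewrite leqNgt; apply/negP => lt.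
      by have := tm _ _ (ltnW lt); rewrite hq hps.
    by apply: dmono; apply: hmin; rewrite hq.
  rewrite negb_exists => /forallP H.
  exists n; split => //; split => p hq.
    by have := ltn_ord (proj1_sig f p); lia.
  by have := H p; rewrite hq.
pose gf (p : 'I_c.+1) : 'I_n.+2 := inord (proj1_sig f p + proj1_sig t p).
have gfE p : (gf p : nat) = proj1_sig f p + proj1_sig t p.
  rewrite inordK //; have := ltn_ord (proj1_sig f p); case: (t01 p); lia.
have gm : forall p p' : 'I_c.+1, p <= p' -> gf p <= gf p'.
  move=> p p' le; rewrite !gfE; have := dmono f le; have := tm _ _ le.
  by move=> h1 h2; apply: leq_add.
exists j; split => //; exists (exist _ gf gm); rewrite actsig; congr pair.
  rewrite {1}(Isl_tri t); apply: tri_map_ext => p; apply: val_inj; rewrite /= ttfE gfE.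
  by case: (t01 p) => e; [have := hb p e|have := hc p e]; rewrite e; case: ltnP; lia.
congr (act B _ b); apply: dhom_ext => p; apply: val_inj; rewrite /= xxfE // gfE.
by case: (t01 p) => e; [have := hb p e|have := hc p e]; rewrite e; case: ltnP; lia.
Qed.

Lemma prism : exists h' : forall c, T c -> E c,
  (forall c x, Dm0 x -> h' c x = h x) /\
  ppmap q w (fun c x => Dm0 x \/ exists f : chom Delta c n, x.2 = act B f b) h'.
Proof.
have [h' [h1 h2]] := iter (leqnn n.+1).
exists h'; split => //; apply: pmap_sub h2 => c [t y] [D|[f /= ->]]; first by left.
have [j [jn [g e]]] := cover t f.
right; exists j; split; last by exists g.
by rewrite /att; case: ifP => _; lia.
Qed.

End Prism.


Lemma min_ex (P : nat -> Prop) : (exists n, P n) -> exists n, P n /\ forall m, m < n -> ~ P m.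
Proof.
move=> [n Pn]; elim: n {-2}n (leqnn n) Pn => [|N IH] n hn Pn.
  by exists n; split => // m; lia.
case: (classic (exists m, m < n /\ P m)) => [[m [mn Pm]]|H].
  by apply: (IH m) => //; lia.
by exists n; split => // m mn Pm; apply: H; exists m.
Qed.

Section CSL.
Variables (k : 'I_2) (A B E Y : sSet) (m : NT A B) (q : NT E Y).
Hypothesis mm : mono m.
Hypothesis kq : kan_fib q.
Variables (u : NT (prodP Isl A) E) (v : NT B E) (w : NT (prodP Isl B) Y).
Hypothesis Huv : forall c a, u c (dk k c, a) = v c (m c a).
Hypothesis Huw : forall c t a, q c (u c (t,a)) = w c (t, m c a).
Hypothesis Hvw : forall c b, q c (v c b) = w c (dk k c, b).

Local Notation T := (prodP Isl B).

Record PL := {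
  Sx : forall c, B c -> Prop;
  hx : forall c, T c -> E c;
  Sx_st : forall c d (f : chom Delta c d) y, Sx y -> Sx (act B f y);
  Sx_m : forall c a, Sx (m c a);
  hx_p : ppmap q w (Dm0 k Sx) hx;
  hx_u : forall c t a, hx (t, m c a) = u c (t, a);
  hx_v : forall c y, hx (dk k c, y) = v c y }.

Definition Rel (r s : PL) : Prop :=
  (forall c y, Sx r y -> Sx s (c:=c) y) /\ (forall c x, Dm0 k (Sx r) x -> hx s (c:=c) x = hx r x).


Lemma mk_pair c (x : T c) : x = (x.1, x.2).
Proof. by case: x. Qed.

Lemma PL0 : PL.
Proof.
pose hx0 c (x : T c) : E c :=
  match excluded_middle_informative (exists a, x.2 = m c a) with
  | left pf => u c (x.1, proj1_sig (constructive_indefinite_description _ pf))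
  | right _ => v c x.2 end.
have hx0u c t a : hx0 c (t, m c a) = u c (t, a).
  rewrite /hx0; case: excluded_middle_informative => [pf|[]]; last by exists a.
  by case: constructive_indefinite_description => a' /= /mm ->.
have hx0v c y : hx0 c (dk k c, y) = v c y.
  rewrite /hx0; case: excluded_middle_informative => [pf|//].
  by case: constructive_indefinite_description => a' /= ->; rewrite Huv.
refine {| Sx := fun c y => exists a, y = m c a; hx := hx0 |}.
- by move=> c d f y [a ->]; exists (act A f a); rewrite nt_nat.
- by move=> c a; exists a.
- split.
  + move=> c d f [t y] [[a /= ->]|/= ->].
      by rewrite -(nt_nat m) !hx0u; exact: (nt_nat u f (t, a)).
    have -> : SLcomp (dk k d) (tri_map f) = dk k c by apply: sig_ext.
    by rewrite !hx0v nt_nat.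
  + move=> c [t y] [[a /= ->]|/= ->]; first by rewrite hx0u Huw.
    by rewrite hx0v Hvw.
- exact: hx0u.
- exact: hx0v.
Qed.


Lemma Rel_refl r : Rel r r.
Proof. by split. Qed.

Lemma Rel_trans r s t : Rel r s -> Rel s t -> Rel r t.
Proof.
move=> [a1 a2] [b1 b2]; split => [c y /a1 /b1 //|c x D].
rewrite b2 ?a2 //; case: D => [D|D]; [left; exact: a1|by right].
Qed.

Lemma union_ub (Ch : PL -> Prop) :
  (forall r s, Ch r -> Ch s -> Rel r s \/ Rel s r) -> exists U : PL, forall r, Ch r -> Rel r U.
Proof.
move=> tot; case: (classic (exists r0, Ch r0)) => [[r0 hr0]|none]; last first.
  by exists PL0 => r hr; exfalso; apply: none; exists r.
have agree r1 r2 c (x : T c) : Ch r1 -> Ch r2 -> Dm0 k (Sx r1) x -> Dm0 k (Sx r2) x -> hx r1 x = hx r2 x.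
  move=> c1 c2 d1 d2; case: (tot _ _ c1 c2) => [[_ e]|[_ e]]; [by rewrite e|by rewrite e].
pose hU c (x : T c) : E c :=
  match excluded_middle_informative (exists r, Ch r /\ Sx r x.2) with
  | left pf => hx (proj1_sig (constructive_indefinite_description _ pf)) x
  | right _ => hx r0 x end.
have key r c (x : T c) : Ch r -> Dm0 k (Sx r) x -> hU c x = hx r x.
  move=> cr D; rewrite /hU; case: excluded_middle_informative => [pf|npf].
    case: constructive_indefinite_description => r1 [c1 s1] /=.
    by apply: agree => //; left.
  apply: agree => //; right; case: D => // sx.
  by exfalso; apply: npf; exists r.
have dom c (x : T c) : Dm0 k (fun c y => exists r, Ch r /\ Sx r (c:=c) y) x ->
    exists r, Ch r /\ Dm0 k (Sx r) x.
  case=> [[r [cr sr]]|hd]; first by exists r; split => //; left.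
  by exists r0; split => //; right.
pose SxU c (y : B c) := exists r, Ch r /\ Sx r (c:=c) y.
have p1 : forall c d (f : chom Delta c d) y, SxU d y -> SxU c (act B f y).
  by move=> c d f y [r [cr sr]]; exists r; split => //; apply: Sx_st.
have p2 : forall c a, SxU c (m c a) by move=> c a; exists r0; split => //; apply: Sx_m.
have p3 : ppmap q w (Dm0 k SxU) hU.
  split.
  + move=> c d f x /dom [r [cr D]].
    rewrite (key r) //; last exact: (Dm0_st (@Sx_st r)).
    by rewrite (key r) //; apply: (proj1 (hx_p r)).
  + move=> c x /dom [r [cr D]]; rewrite (key r) //; exact: (proj2 (hx_p r)).
have p4 : forall c t a, hU c (t, m c a) = u c (t, a).
  move=> c t a; rewrite (key r0) //; first exact: hx_u.
  by left; apply: Sx_m.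
have p5 : forall c y, hU c (dk k c, y) = v c y.
  by move=> c y; rewrite (key r0) //; [exact: hx_v|right].
exists (@Build_PL SxU hU p1 p2 p3 p4 p5) => r cr; split => /=.
  by move=> c y sy; exists r.
by move=> c x D; apply: key.
Qed.



Lemma maximal_full : exists r : PL, forall c (y : B c), Sx r y.
Proof.
have Z1 : forall r, boolp.asbool (Rel r r).
  by move=> r; apply/boolp.asboolP; exact: Rel_refl.
have Z2 : forall r s t, boolp.asbool (Rel r s) -> boolp.asbool (Rel s t) -> boolp.asbool (Rel r t).
  by move=> r s t /boolp.asboolP h1 /boolp.asboolP h2; apply/boolp.asboolP; exact: Rel_trans h1 h2.
have Z3 : forall Ch : classical_sets.set PL,
    classical_sets.total_on Ch (fun x y => boolp.asbool (Rel x y)) ->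
    exists t, forall s, Ch s -> boolp.asbool (Rel s t).
  move=> Ch tot; have [|U hU] := @union_ub Ch.
    move=> r s cr cs; case: (tot r s cr cs) => /boolp.asboolP; by [left|right].
  by exists U => r cr; apply/boolp.asboolP; exact: hU.
have [rs pm] := @classical_sets.ZL_preorder PL PL0 (fun r s => boolp.asbool (Rel r s)) Z1 Z2 Z3.
exists rs => c y; apply: NNPP => ny.
  have [n [[b nb] hmin]] := @min_ex (fun n => exists y : B n, ~ Sx rs y) (ex_intro _ c (ex_intro _ y ny)).
  have low : forall m0, m0 < n -> forall y : B m0, Sx rs y.
    by move=> m0 lt y0; apply: NNPP => ny0; apply: (hmin m0 lt); exists y0.
  have [h' [e1 e2]] := prism kq (@Sx_st rs) nb low (hx_p rs).
  pose Sx' c (y : B c) := Sx rs y \/ exists f : chom Delta c n, y = act B f b.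
  have p1 : forall c d (f : chom Delta c d) y, Sx' d y -> Sx' c (act B f y).
    move=> c0 d f y0 [s0|[g ->]]; first by left; apply: Sx_st.
    by right; exists (ccomp g f); rewrite act_comp.
  have p2 : forall c a, Sx' c (m c a) by move=> c0 a; left; apply: Sx_m.
  have p3 : ppmap q w (Dm0 k Sx') h'.
    apply: (pmap_sub (D2 := fun c x => Dm0 k (Sx rs) x \/ exists f : chom Delta c n, x.2 = act B f b)) e2.
    by move=> c0 x [[s0|[g e]]|hd]; [left; left|right; exists g|left; right].
  have p4 : forall c t a, h' c (t, m c a) = u c (t, a).
    by move=> c0 t a; rewrite e1; [exact: hx_u|left; apply: Sx_m].
  have p5 : forall c y, h' c (dk k c, y) = v c y.
    by move=> c0 y0; rewrite e1; [exact: hx_v|right].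
  have R1 : Rel rs (@Build_PL Sx' h' p1 p2 p3 p4 p5).
    split => /= [c0 y0 s0|c0 x D]; first by left.
    by apply: e1.
  have := pm (@Build_PL Sx' h' p1 p2 p3 p4 p5) (introT (boolp.asboolP _) R1).
  move/(boolp.asboolP _) => [/= R2 _].
  apply: nb; apply: R2; right; exists (cid (n : Delta)); by rewrite act_id.
Qed.

Lemma csl_main : exists h : NT (prodP Isl B) E, (forall c t a, h c (t, m c a) = u c (t,a)) /\
     (forall c b, h c (dk k c, b) = v c b) /\ (forall c tb, q c (h c tb) = w c tb).
Proof.
have [r full] := maximal_full.
have D : forall c (x : T c), Dm0 k (Sx r) x by move=> c x; left; apply: full.
exists (@Build_NT Delta T E (@hx r) (fun c d f x => proj1 (hx_p r) c d f x (D d x))).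
split; first exact: hx_u.
split; first exact: hx_v.
by move=> c x; apply: (proj2 (hx_p r)).
Qed.

End CSL.


Lemma nt_ext (C : Cat) (X Y : PSh C) (a b : NT X Y) :
  (forall c x, a c x = b c x) -> a = b.
Proof.
case: a => a Ha; case: b => b Hb /= E.
have E' : a = b by apply: functional_extensionality_dep => c; apply: functional_extensionality => x; exact: E.
subst b; f_equal; apply: proof_irrelevance.
Qed.


Lemma CSL (k : 'I_2) (A B E Y : sSet) (m : NT A B) (q : NT E Y) :
  mono m -> kan_fib q ->
  forall (u : NT (prodP Isl A) E) (v : NT B E) (w : NT (prodP Isl B) Y),
   (forall c a, u c (dk k c, a) = v c (m c a)) ->
   (forall c t a, q c (u c (t,a)) = w c (t, m c a)) ->
   (forall c b, q c (v c b) = w c (dk k c, b)) ->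
   exists h : NT (prodP Isl B) E, (forall c t a, h c (t, m c a) = u c (t,a)) /\
     (forall c b, h c (dk k c, b) = v c b) /\ (forall c tb, q c (h c tb) = w c tb).
Proof.
move=> mm kq u v w H1 H2 H3; exact: (csl_main mm kq H1 H2 H3).
Qed.

Definition ran_act (E : sSet) (c d : SL) (f : chom SL c d)
  (xi : NT (restrict blacktriangle (yo d)) E) : NT (restrict blacktriangle (yo c)) E.
Proof.
refine (@Build_NT Delta (restrict blacktriangle (yo c)) E (fun n phi => xi n (ccomp f phi)) _).
move=> n n' g phi /=; rewrite -nt_nat /=; congr (xi _ _); exact: ccomp_assoc.
Defined.

Definition Ran (E : sSet) : slPSh.
Proof.
refine {| ps := fun c => NT (restrict blacktriangle (yo c)) E;
          act := @ran_act E |}.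
- by move=> c xi; apply: nt_ext => n phi /=; congr (xi _ _); apply: sig_ext.
- by move=> a b c f g xi; apply: nt_ext => n phi /=; congr (xi _ _); apply: sig_ext.
Defined.

Definition Rq (E Y : sSet) (q : NT E Y) : NT (Ran E) (Ran Y).
Proof.
refine (@Build_NT SL (Ran E) (Ran Y) (fun c xi => ntcomp q xi) _).
by move=> c d f xi; apply: nt_ext.
Defined.

Lemma RqE (E Y : sSet) (q : NT E Y) c xi n phi : Rq q c xi n phi = q n (xi n phi).
Proof. by []. Qed.

Section Transp.
Variables (E : sSet) (A : slPSh).

Definition trA (u : NT (prodP Intv A) (Ran E)) : NT (prodP Isl (restrict blacktriangle A)) E.
Proof.
refine (@Build_NT Delta (prodP Isl (restrict blacktriangle A)) E
  (fun n ta => u (tri n : SL) ta n (cid (tri n : SL))) _).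
move=> n n' g [t a] /=.
have := nt_nat u (fmap blacktriangle g) (t, a) => /= ->.
rewrite -[in RHS]nt_nat /=; congr (u _ _ _ _); by apply: sig_ext.
Defined.

Definition trV (v : NT (prodP (termP SL) A) (Ran E)) : NT (restrict blacktriangle A) E.
Proof.
refine (@Build_NT Delta (restrict blacktriangle A) E
  (fun n a => v (tri n : SL) (tt, a) n (cid (tri n : SL))) _).
move=> n n' g a /=.
have := nt_nat v (fmap blacktriangle g) (tt, a) => /= ->.
rewrite -[in RHS]nt_nat /=; congr (v _ _ _ _); by apply: sig_ext.
Defined.

End Transp.

Definition untr_c (E : sSet) (B : slPSh) (h : NT (prodP Isl (restrict blacktriangle B)) E)
  (c : SL) (tb : prodP Intv B c) : Ran E c.
Proof.
refine (@Build_NT Delta (restrict blacktriangle (yo c)) E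
    (fun n phi => h n (ccomp tb.1 phi, act B phi tb.2)) _).
move=> n n' g phi /=; rewrite -nt_nat /= -act_comp; congr (h _ (_, _)).
exact: ccomp_assoc.
Defined.

Definition untr (E : sSet) (B : slPSh) (h : NT (prodP Isl (restrict blacktriangle B)) E) :
  NT (prodP Intv B) (Ran E).
Proof.
refine (@Build_NT SL (prodP Intv B) (Ran E) (untr_c h) _).
move=> c d f [t b]; apply: nt_ext => n phi /=.
rewrite -act_comp; congr (h _ (_, _)); exact: sig_ext.
Defined.

Lemma Rq_fib (E Y : sSet) (q : NT E Y) : kan_fib q -> cub_fib (Rq q).
Proof.
move=> kq k A B m mm u v w H1 H2 H3.
have mm' : mono (restrict_nt blacktriangle m) by move=> n; exact: mm.
have := @CSL k _ _ _ _ (restrict_nt blacktriangle m) q mm' kq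
   (trA u) (trV v) (trA w).
case.
- by move=> c a /=; rewrite -H1.
- by move=> c t a /=; rewrite -H2.
- by move=> c b /=; rewrite -(H3 _ tt).
move=> h [h1 [h2 h3]].
exists (untr h); split; [|split].
- move=> c i a; apply: nt_ext => n phi /=.
  have -> : act B phi (m c a) = m _ (act A phi a) by rewrite nt_nat.
  rewrite h1 /=.
  have := nt_nat u phi (i, a) => /= ->.
  by rewrite /=; congr (_ _ _); apply: sig_ext.
- move=> c t b; apply: nt_ext => n phi /=.
  have -> : SLcomp (const_hom c k) phi = dk k n by apply: sig_ext.
  rewrite h2 /=; case: t.
  have := nt_nat v phi (tt, b) => /= ->.
  by rewrite /=; congr (_ _ _); apply: sig_ext.
- move=> c [i b]; apply: nt_ext => n phi /=.
  rewrite h3 /=.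
  have := nt_nat w phi (i, b) => /= ->.
  by rewrite /=; congr (_ _ _); apply: sig_ext.
Qed.

Definition gX_c (X E : sSet) (u : NT X E) (n : Delta) (x : X n) : Ran E (tri n : SL).
Proof.
refine (@Build_NT Delta (restrict blacktriangle (yo (tri n : SL))) E
    (fun n' phi => u n' (act X (sl2d phi) x)) _).
move=> a b g phi /=; rewrite -nt_nat -act_comp; congr (u _ (act X _ x)).
exact: sig_ext.
Defined.

Definition gX (X E : sSet) (u : NT X E) : NT X (restrict blacktriangle (Ran E)).
Proof.
refine (@Build_NT Delta X (restrict blacktriangle (Ran E)) (@gX_c X E u) _).
move=> a b g x; apply: nt_ext => n phi /=; rewrite -act_comp; congr (u _ (act X _ x)).
exact: sig_ext.
Defined.

Definition vF_c (F : slPSh) (Y : sSet) (v : NT (restrict blacktriangle F) Y) (c : SL) (y : F c) : Ran Y c.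
Proof.
refine (@Build_NT Delta (restrict blacktriangle (yo c)) Y
    (fun n' phi => v n' (act F phi y)) _).
by move=> a b g phi /=; rewrite -nt_nat /= -act_comp.
Defined.

Definition vF (F : slPSh) (Y : sSet) (v : NT (restrict blacktriangle F) Y) : NT F (Ran Y).
Proof.
refine (@Build_NT SL F (Ran Y) (@vF_c F Y v) _).
by move=> a b g y; apply: nt_ext => n phi /=; rewrite -act_comp.
Defined.

Definition hF_c (F : slPSh) (E : sSet) (H : NT F (Ran E)) (n : Delta) (y : restrict blacktriangle F n) : E n :=
  H (tri n : SL) y n (cid (tri n : SL)).

Definition hF (F : slPSh) (E : sSet) (H : NT F (Ran E)) : NT (restrict blacktriangle F) E.
Proof.
refine (@Build_NT Delta (restrict blacktriangle F) E (@hF_c F E H) _).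
move=> a b g y; rewrite /hF_c /=.
have := nt_nat H (fmap blacktriangle g) y => /= ->.
rewrite -[in RHS]nt_nat /=; congr (H _ _ _ _); exact: sig_ext.
Defined.

Theorem mainTheorem13 :
  forall (X : sSet) (L : slPSh) (eta : NT X (restrict blacktriangle L)),
    is_lan_unit eta ->
    forall (F : slPSh) (j : NT L F),
      cub_triv_cof j -> cub_fibrant F ->
      KQ_weq (ntcomp (restrict_nt blacktriangle j) eta).
Proof.
move=> X L eta lan F j [jm jl] _.
exists (restrict blacktriangle F), (ntcomp (restrict_nt blacktriangle j) eta).
exists (@Build_NT Delta _ _ (fun c y => y) (fun c d f x => erefl)).
split; last split; last by [].
- move=> E Y q kq u v huv.
  have [u' [hu' _]] := lan _ (gX u).
  have comm : forall c l, Rq q c (u' c l) = vF v c (j c l).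
    have [h0 [_ hu0]] := lan _ (ntcomp (restrict_nt blacktriangle (Rq q)) (gX u)).
    move=> c l.
    have e1 : Rq q c (u' c l) = h0 c l.
      by apply: (hu0 (ntcomp (Rq q) u')) => n x /=; rewrite hu'.
    have e2 : vF v c (j c l) = h0 c l.
      apply: (hu0 (ntcomp (vF v) j)) => n x; apply: nt_ext => n' phi /=.
      rewrite (huv n' (act X (sl2d phi) x)) /= !nt_nat /=.
      rewrite -(nt_nat v) /=; congr (v _ (act F _ _)); exact: sig_ext.
    by rewrite e1 e2.
  have [H [H1 H2]] := jl _ _ _ (Rq_fib kq) u' (vF v) comm.
  exists (hF H); split.
  + move=> n x; rewrite /= /hF_c H1 hu' /=.
    have -> : sl2d (cid (tri n : SL)) = cid n by exact: sig_ext.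
    by rewrite act_id.
  + move=> n y /=; rewrite /hF_c.
    by rewrite -[q _ _]/(Rq q _ (H _ y) n _) H2 /= act_id.
- move=> A B m mm u v huv; exists v; split => // c a.
  by rewrite -huv.
Qed.
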